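(* Let $k\ge2$ be an integer and $\mathbb{F}$ a finite field. There is a black-box transformation with parameters $(t=1,k,k_0=2,\ell=k-1,\mathbb{F})$ and rate $1-1/k$, in which $c_j=k-1$ for every $j\in[k]$.
   Context: A $k$-party $\ell$-LMSSS over $\mathbb{F}$: an $\mathbb{F}$-linear map $\mathsf{Share}:\mathbb{F}^\ell\times\mathbb{F}^e\to\mathbb{F}^{b_1}\times\dots\times\mathbb{F}^{b_k}$ together with an access structure (sets that can linearly recover the secret) and adversary structure (sets whose shares, under uniform randomness, are distributed independently of the secret); information rate $\ell/\sum_jb_j$. Black-box transformation with parameters $(t,k,k_0,\ell,\mathbb{F})$: a $k$-party $\ell$-LMSSS $\mathcal{L}=(\mathsf{Share}_\mathcal{L},\mathsf{Rec}_\mathcal{L})$ over $\mathbb{F}$ with parameters $(e,b_1,\dots,b_k)$ (all $k$ parties together qualified), replication functions $\psi_i:[k_0]\to2^{[k]}$ ($i\in[\ell]$) and conversion functions $\varphi_j:\mathbb{F}^{c_j}\to\mathbb{F}^{b_j}$, $c_j=\sum_{i=1}^\ell|\{v\in[k_0]:j\in\psi_i(v)\}|$, such that for every $(y_i^{(v)})_{i\in[\ell],v\in[k_0]}$ there is $\mathbf{r}$ with $(\varphi_j(\mathbf{Y}(j)))_{j}=\mathsf{Share}_\mathcal{L}((\sum_vy_1^{(v)},\dots,\sum_vy_\ell^{(v)}),\mathbf{r})$, where $\mathbf{Y}(j)=(y_i^{(v)})_{i,v:\,j\in\psi_i(v)}$; and for every $T\subseteq[k]$ with $|T|\le t$ and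 every $i$, $|\bigcup_{j\in T}\{v:j\in\psi_i(v)\}|\le k_0-1$. Its rate is the information rate of $\mathcal{L}$. *)

(* Defs.v *)
From HB Require Import structures.
From mathcomp Require Import all_boot all_order all_algebra.
Set Implicit Arguments. Unset Strict Implicit. Unset Printing Implicit Defensive.
Import Order.TTheory GRing.Theory Num.Theory.
Local Open Scope ring_scope.

Definition shares (F : finFieldType) (k : nat) (b : 'I_k -> nat) :=
  forall j : 'I_k, 'rV[F]_(b j).

Definition share_linear (F : finFieldType) (k l e : nat) (b : 'I_k -> nat)
  (Share : 'rV[F]_l -> 'rV[F]_e -> shares F b) : Prop :=
  forall (a : F) (s1 s2 : 'rV[F]_l) (r1 r2 : 'rV[F]_e) (j : 'I_k),
    Share (a *: s1 + s2) (a *: r1 + r2) j = a *: Share s1 r1 j + Share s2 r2 j.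

Definition qualified (F : finFieldType) (k l e : nat) (b : 'I_k -> nat)
  (Share : 'rV[F]_l -> 'rV[F]_e -> shares F b) (A : {set 'I_k}) : Prop :=
  exists Rec : shares F b -> 'rV[F]_l,
    [/\ (forall (a : F) (x y : shares F b),
           Rec (fun j => a *: x j + y j) = a *: Rec x + Rec y),
        (forall x y : shares F b, (forall j, j \in A -> x j = y j) -> Rec x = Rec y)
      & (forall s r, Rec (Share s r) = s)].

(* A set A is in the adversary structure: under uniform randomness, the shares
   of A are distributed independently of the secret. *)
Definition unauthorized (F : finFieldType) (k l e : nat) (b : 'I_k -> nat)
  (Share : 'rV[F]_l -> 'rV[F]_e -> shares F b) (A : {set 'I_k}) : Prop :=
  forall (s s' : 'rV[F]_l) (v : shares F b),
    #|[pred r : 'rV[F]_e | [forall j in A, Share s r j == v j]]| =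
    #|[pred r : 'rV[F]_e | [forall j in A, Share s' r j == v j]]|.

Definition LMSSS (F : finFieldType) (k l e : nat) (b : 'I_k -> nat)
  (Share : 'rV[F]_l -> 'rV[F]_e -> shares F b) : Prop :=
  share_linear Share.

Definition info_rate (k l : nat) (b : 'I_k -> nat) : rat :=
  (l%:R / (\sum_(j < k) b j)%:R)%R.

Definition recv_idx (k l k0 : nat) (psi : 'I_l -> 'I_k0 -> {set 'I_k})
  (j : 'I_k) := {p : 'I_l * 'I_k0 | j \in psi p.1 p.2}.

Definition c_j (k l k0 : nat) (psi : 'I_l -> 'I_k0 -> {set 'I_k}) (j : 'I_k) : nat :=
  (\sum_(i < l) #|[set v : 'I_k0 | j \in psi i v]|)%N.

Definition Yj (F : finFieldType) (k l k0 : nat) (psi : 'I_l -> 'I_k0 -> {set 'I_k})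
  (y : 'I_l -> 'I_k0 -> F) (j : 'I_k) : {ffun recv_idx psi j -> F} :=
  [ffun p : recv_idx psi j => y (val p).1 (val p).2].

Definition black_box_transformation (F : finFieldType) (t k k0 l : nat)
  (e : nat) (b : 'I_k -> nat)
  (Share : 'rV[F]_l -> 'rV[F]_e -> shares F b)
  (psi : 'I_l -> 'I_k0 -> {set 'I_k})
  (phi : forall j : 'I_k, {ffun recv_idx psi j -> F} -> 'rV[F]_(b j)) : Prop :=
  [/\ LMSSS Share,
      qualified Share [set: 'I_k],
      (forall y : 'I_l -> 'I_k0 -> F, exists r : 'rV[F]_e,
          forall j : 'I_k,
            phi j (@Yj F k l k0 psi y j) = Share (\row_(i < l) \sum_(v < k0) y i v) r j)
    & (forall T : {set 'I_k}, (#|T| <= t)%N -> forall i : 'I_l,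
          (#|\bigcup_(j in T) [set v : 'I_k0 | j \in psi i v]| <= k0 - 1)%N)].

(* Main.v *)
Require Import Defs.
From mathcomp Require Import all_boot all_order all_algebra.
From mathcomp Require Import ring.
Import Order.TTheory GRing.Theory Num.Theory.
Local Open Scope ring_scope.

Section Constr.
Variables (n : nat) (F : finFieldType).
Local Notation k := n.+2.

Definition bb : 'I_k -> nat := fun _ => 1%N.

Definition psiC (i : 'I_n.+1) (v : 'I_2) : {set 'I_k} :=
  [set j : 'I_k | if (v : nat) == 0%N then (j : nat) == i else (j : nat) != i].

Definition wC (j : 'I_k) (p : 'I_n.+1 * 'I_2) : F :=
  if (j : nat) == n.+1 then (if (p.2 : nat) == 0%N then 0 else 1)
  else (if (p.2 : nat) == 0%N then 1 else -1).

Definition phiC (j : 'I_k) (f : {ffun recv_idx psiC j -> F}) : 'rV[F]_(bb j) :=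
  \row_(_ < 1) \sum_(p : 'I_n.+1 * 'I_2)
     wC j p * oapp f 0 (insub p : option (recv_idx psiC j)).

Definition ShareC (s : 'rV[F]_n.+1) (r : 'rV[F]_1) : shares F bb :=
  fun j => \row_(_ < 1) (if (j : nat) == n.+1 then r 0 0
           else \sum_(i < n.+1) (if (i : nat) == j then s 0 i else 0) - r 0 0).

End Constr.

Theorem mainTheorem13 (k : nat) (F : finFieldType) : (2 <= k)%N ->
  exists (e : nat) (b : 'I_k -> nat)
         (Share : 'rV[F]_(k.-1) -> 'rV[F]_e -> shares F b)
         (psi : 'I_(k.-1) -> 'I_2 -> {set 'I_k})
         (phi : forall j : 'I_k, {ffun recv_idx psi j -> F} -> 'rV[F]_(b j)),
    [/\ @black_box_transformation F 1 k 2 k.-1 e b Share psi phi,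
        @info_rate k k.-1 b = 1 - 1 / k%:R :> rat
      & forall j : 'I_k, c_j psi j = k.-1].
Proof.
case: k => [|[|n]] // _.
exists 1%N, (@bb n), (@ShareC n F), (@psiC n), (@phiC n F).
split; first split.
- move=> a s1 s2 r1 r2 j; apply/rowP => z; rewrite !mxE.
  case: ifP => _; first by [].
  under eq_bigr do rewrite ?mxE.
  have -> : \sum_(i < n.+1) (if (i:nat) == j then a * s1 0 i + s2 0 i else 0)
     = a * \sum_(i < n.+1) (if (i:nat) == j then s1 0 i else 0)
       + \sum_(i < n.+1) (if (i:nat) == j then s2 0 i else 0).
    rewrite mulr_sumr -big_split; apply: eq_bigr => i _.
    case: (_ == _); first by []. by rewrite /= mulr0 addr0.
  ring.
- pose last : 'I_n.+2 := ord_max.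
  exists (fun x => \row_(i < n.+1) (x (widen_ord (leqnSn _) i) 0 0 + x last 0 0)).
  split.
  + move=> a x y; apply/rowP => i; rewrite !mxE; ring.
  + by move=> x y H; apply/rowP => i; rewrite !mxE !H ?inE.
  + move=> s r; apply/rowP => i; rewrite !mxE /=.
    rewrite (ltn_eqF (ltn_ord i)) eqxx.
    rewrite -big_mkcond /= (big_pred1 i) ?subrK //.
- move=> y.
  exists (\row_(_ < 1) \sum_(i < n.+1) y i ord_max).
  move=> j; apply/rowP => z; rewrite !mxE.
  have E : forall p : 'I_n.+1 * 'I_2,
    wC n F j p * oapp (Yj (F:=F) (@psiC n) y j) 0 (insub p : option (recv_idx (@psiC n) j))
    = wC n F j p * (if j \in psiC n p.1 p.2 then y p.1 p.2 else 0).
    move=> p; case: insubP => [q Pq vq|nP] /=.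
      by rewrite Pq ffunE vq.
    by rewrite (negbTE nP).
  under eq_bigr do rewrite E.
  rewrite -(pair_big xpredT xpredT (fun i v => wC n F j (i, v) *
      (if j \in psiC n (i, v).1 (i, v).2 then y (i, v).1 (i, v).2 else 0))) /=.
  under eq_bigr do rewrite big_ord_recr big_ord1 /=.
  rewrite /wC /psiC /=.
  case: ifP => Hj.
  + apply: eq_bigr => i _; rewrite !inE /=.
    have -> : ((j:nat) == i) = false.
      by rewrite (eqP Hj) eqn_leq leqNgt ltn_ord.
    by rewrite mul0r add0r mul1r.
  + rewrite -sumrB; apply: eq_bigr => i _; rewrite !inE /= !mxE.
    rewrite big_ord_recr big_ord1 /= [(i:nat) == j]eq_sym.
    case: ifP => _ /=.
      by rewrite mul1r mulN1r subr0 addrK.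
    by rewrite mulr0 mulN1r add0r.
- move=> T HT i.
  apply/card_le1_eqP => v1 v2.
  move=> /bigcupP [j1 Hj1]; rewrite inE => H1.
  move=> /bigcupP [j2 Hj2]; rewrite inE => H2.
  have ej : j1 = j2 by have := card_le1_eqP HT; move/(_ j1 j2 Hj1 Hj2).
  subst j2; move: H1 H2; rewrite !inE.
  case: v1 => [[|[|v1]] p1] //; case: v2 => [[|[|v2]] p2] //=;
    try by move=> *; apply/val_inj.
  1,2: by case: ((j1 : nat) == i).
- rewrite /info_rate /bb sum_nat_const card_ord muln1 /=.
  field.
  by rewrite -natrD pnatr_eq0.
- move=> j; rewrite /c_j.
  transitivity (\sum_(i < n.+1) 1)%N; last by rewrite sum_nat_const card_ord muln1.
  apply: eq_bigr => i _.
  rewrite (_ : [set v | j \in psiC n i v] =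
               [set (if (j:nat) == i then ord0 else ord_max : 'I_2)]) ?cards1 //.
  apply/setP => v; rewrite !inE.
  case: v => [[|[|v]] pv] //=; case: ifP => //=.
Qed.
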